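(* For every integer $d\ge3$, the number of binomials of degree $d$ in the set $\mathcal{G}'=\{g^{\mathbf{s}}:\mathbf{s}\in\{1,2\}^n,n\in\mathbb{N}_0\}$ equals the Fibonacci number $F_{d-3}$.
   Context: Fibonacci numbers: $F_0=0$, $F_1=1$, $F_{n+2}=F_{n+1}+F_n$. The binomials live in $R=\mathbb{K}[x_{i,i+1},x_{i,i+2}: i\in\mathbb{N}]$ ($\mathbb{K}$ a field). Let $E=\{[i,i+1],[i,i+2]:i\in\mathbb{N}\}$, totally ordered by $[i,j]\le[k,l]$ iff $i\le k$ and $j\le l$. For a binomial $g=\prod x_{i,j}^{u_{i,j}}-\prod x_{i,j}^{v_{i,j}}$, $w_g([i,j])=u_{i,j}-v_{i,j}$; a finitely supported $w:E\to\mathbb{Z}$ has associated binomial $\prod x_{i,j}^{\max(w([i,j]),0)}-\prod x_{i,j}^{\max(-w([i,j]),0)}$. A vertex $n$ is adjacent to $g$ if $n\in\{i,j\}$ for some $[i,j]$ with $w_g([i,j])\ne0$. Let $g^{\emptyset}=x_{1,2}x_{3,5}^2x_{6,7}-x_{1,3}x_{2,3}x_{5,6}x_{5,7}$; recursively, for $\mathbf{s}=(s_1,\dots,s_n)$ with $w=w_{g^{\mathbf{s}}}$ and $k$ the largest vertex adjacent to $g^{\mathbf{s}}$, $g^{(s_1,\dots,s_n,1)}$ is the binomial of the weight $[i,j]\mapsto w([i,j])$ if $[i,j]\le[k-4,k-2]$, $2w([i,j])$ if $[i,j]=[k-2,k]$, $-w([i-2,j-2])$ if $[i,j]\ge[k,k+1]$,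 $0$ otherwise; and $g^{(s_1,\dots,s_n,2)}$ is the binomial of the weight $[i,j]\mapsto w([i,j])$ if $[i,j]\le[k-4,k-2]$, $2w([i,j])$ if $[i,j]=[k-2,k-1]$, $-2w([k-2,k-1])$ if $[i,j]=[k-1,k+1]$, $w([i-3,j-3])$ if $[i,j]\ge[k+1,k+2]$, $0$ otherwise. *)

(* Defs.v *)
From mathcomp Require Import all_boot all_order all_algebra.
Set Implicit Arguments. Unset Strict Implicit. Unset Printing Implicit Defensive.
Import Order.TTheory GRing.Theory Num.Theory.
Local Open Scope ring_scope.

Fixpoint fib (n : nat) : nat :=
  match n with
  | 0 => 0
  | 1 => 1
  | (m.+1 as p).+1 => (fib p + fib m)%N
  end.

(* Edges of E: (i, false) encodes [i, i+1] (variable x_{i,i+1}),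
               (i, true)  encodes [i, i+2] (variable x_{i,i+2}). *)
Definition edge := (nat * bool)%type.
Definition esrc (e : edge) : nat := e.1.
Definition etgt (e : edge) : nat := (e.1 + (if e.2 then 2 else 1))%N.

Definition edge_le (e f : edge) : bool := (esrc e <= esrc f)%N && (etgt e <= etgt f)%N.

(* A weight w : E -> Z (a binomial is identified with its weight: the binomial
   associated to w is prod x^{max(w,0)} - prod x^{max(-w,0)}). *)
Definition weight := edge -> int.

Definition adjacent (w : weight) (n : nat) : Prop :=
  exists e : edge, w e != 0 /\ (n = esrc e \/ n = etgt e).

Definition largest_adjacent (w : weight) (k : nat) : Prop :=
  adjacent w k /\ forall n, adjacent w n -> (n <= k)%N.

(* weight of g^emptyset = x12 x35^2 x67 - x13 x23 x56 x57 *)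
Definition g0 : weight := fun e =>
  match e with
  | (1, false)%N => 1
  | (3, true)%N => 2
  | (6, false)%N => 1
  | (1, true)%N => -1
  | (2, false)%N => -1
  | (5, false)%N => -1
  | (5, true)%N => -1
  | _ => 0
  end.

(* the weight of g^(s,1), given w = w_{g^s} and k its largest adjacent vertex *)
Definition step1 (w : weight) (k : nat) : weight := fun e =>
  if edge_le e ((k - 4)%N, true) then w e
  else if e == ((k - 2)%N, true) then 2 * w e
  else if edge_le (k, false) e then - w ((e.1 - 2)%N, e.2)
  else 0.

Definition step2 (w : weight) (k : nat) : weight := fun e =>
  if edge_le e ((k - 4)%N, true) then w e
  else if e == ((k - 2)%N, false) then 2 * w e
  else if e == ((k - 1)%N, true) then - (2 * w ((k - 2)%N, false))
  else if edge_le (k.+1, false) e then w ((e.1 - 3)%N, e.2)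
  else 0.

Inductive gs : seq nat -> weight -> Prop :=
  | gs_nil : gs [::] g0
  | gs_1 s w k : gs s w -> largest_adjacent w k -> gs (rcons s 1%N) (step1 w k)
  | gs_2 s w k : gs s w -> largest_adjacent w k -> gs (rcons s 2%N) (step2 w k).

Definition in_Gprime (w : weight) : Prop := exists s, gs s w.

Definition posp (x : int) : nat := if 0 <= x then `|x|%N else 0%N.
Definition negp (x : int) : nat := if x < 0 then `|x|%N else 0%N.

(* The binomial of w has (total) degree d: with N bounding the support of w,
   d is the maximum of the degrees of its two monomials. *)
Definition has_degree (w : weight) (d : nat) : Prop :=
  exists N : nat, (forall e : edge, (N <= e.1)%N -> w e = 0) /\
    d = maxn (\sum_(i < N) (posp (w (val i, false)) + posp (w (val i, true))))%N
             (\sum_(i < N) (negp (w (val i, false)) + negp (w (val i, true))))%N.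

(* Main.v *)
Require Import Defs.
From mathcomp Require Import all_boot all_order all_algebra zify.
From Stdlib Require Import FunctionalExtensionality.
Set Implicit Arguments. Unset Strict Implicit. Unset Printing Implicit Defensive.
Import Order.TTheory GRing.Theory Num.Theory.
Local Open Scope ring_scope.

Lemma step1E w k i b : (4 <= k)%N -> step1 w k (i, b) =
  if (i <= k - 4)%N then w (i, b)
  else if (i == k - 2)%N && b then 2 * w (i, b)
  else if (k <= i)%N then - w ((i - 2)%N, b) else 0.
Proof.
move=> hk; rewrite /step1 /edge_le /esrc /etgt /= xpair_eqE.
case: b => /=; repeat (case: ifP => //=); lia.
Qed.

Lemma step2E w k i b : (4 <= k)%N -> step2 w k (i, b) =
  if (i <= k - 4)%N then w (i, b)
  else if (i == k - 2)%N && ~~ b then 2 * w (i, b)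
  else if (i == k - 1)%N && b then - (2 * w ((k - 2)%N, false))
  else if (k < i)%N then w ((i - 3)%N, b) else 0.
Proof.
move=> hk; rewrite /step2 /edge_le /esrc /etgt /= !xpair_eqE.
case: b => /=; repeat (case: ifP => //=); try lia.
Qed.

Ltac simpif := repeat first [ rewrite ifT; [|by lia] | rewrite ifF; [|by lia] ].

Definition Inv (w : weight) (k : nat) (sg : int) : Prop :=
 [/\ (7 <= k)%N, sg = 1 \/ sg = -1,
   (forall b, w ((k-3)%N, b) = 0),
   (w ((k-2)%N,false) = sg /\ w ((k-2)%N,true) = sg) /\
   (w ((k-1)%N,false) = -sg /\ w ((k-1)%N,true) = 0)
   & forall e, (k <= e.1)%N -> w e = 0].

Lemma inv_g0 : Inv g0 7 (-1).
Proof.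
split=> //; first by right.
- move=> [i b] /= hi.
  by case: i hi => [|[|[|[|[|[|[|i]]]]]]] // _; case: b.
Qed.

Lemma inv_step1 w k sg : Inv w k sg -> Inv (step1 w k) k.+2 (- sg).
Proof.
case=> hk hs h3 [[h2f h2t] [h1f h1t]] h0.
have [m em] : exists m, k = m.+3 by exists (k-3)%N; lia.
subst k; rewrite !subSS !subn0 in h3 h2f h2t h1f h1t.
split; [lia| by case: hs => ->; [right|left] | move=> b | split; split | move=> [i b] /= hi].
all: rewrite ?subSS ?subn0 step1E; last lia; simpif; rewrite ?subSS ?subn0.
all: try (case: b => /=; simpif).
all: rewrite ?h1f ?h1t ?h2f ?h2t ?h3 ?oppr0 ?opprK ?mulr0 //=.
all: by rewrite h0 ?oppr0 //=; lia.
Qed.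

Lemma inv_step2 w k sg : Inv w k sg -> Inv (step2 w k) k.+3 sg.
Proof.
case=> hk hs h3 [[h2f h2t] [h1f h1t]] h0.
have [m em] : exists m, k = m.+3 by exists (k-3)%N; lia.
subst k; rewrite !subSS !subn0 in h3 h2f h2t h1f h1t.
split; [lia| by [] | move=> b | split; split | move=> [i b] /= hi].
all: rewrite ?subSS ?subn0 step2E; last lia; simpif; rewrite ?subSS ?subn0.
all: try (case: b => /=; simpif).
all: rewrite ?h1f ?h1t ?h2f ?h2t ?h3 ?oppr0 ?opprK ?mulr0 //=.
all: by rewrite h0 ?oppr0 //=; lia.
Qed.

Definition pos (w : weight) N := (\sum_(i < N) (posp (w (val i, false)) + posp (w (val i, true))))%N.
Definition neg (w : weight) N := (\sum_(i < N) (negp (w (val i, false)) + negp (w (val i, true))))%N.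

Lemma pos_step1 w k sg : Inv w k sg ->
  pos (step1 w k) k.+2 = (pos w k).+1 /\ neg (step1 w k) k.+2 = (neg w k).+1.
Proof.
case=> hk hs h3 [[h2f h2t] [h1f h1t]] h0.
have [m em] : exists m, k = m.+3 by exists (k-3)%N; lia.
subst k; rewrite !subSS !subn0 in h3 h2f h2t h1f h1t.
have eqm : forall b (i : 'I_m), step1 w m.+3 (val i, b) = w (val i, b).
  by move=> b i; have hi : (val i < m)%N := ltn_ord i; rewrite step1E; [simpif | lia].
rewrite /pos /neg !big_ord_recr /=.
split; under eq_bigr => i _ do rewrite !eqm.
all: rewrite !step1E; try lia; simpif; rewrite ?subSS ?subn0.
all: rewrite ?h3 ?h1f ?h1t ?h2f ?h2t; case: hs => ->.
all: rewrite /posp /negp /=; lia.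
Qed.

Lemma pos_step2 w k sg : Inv w k sg ->
  pos (step2 w k) k.+3 = (pos w k + 2)%N /\ neg (step2 w k) k.+3 = (neg w k + 2)%N.
Proof.
case=> hk hs h3 [[h2f h2t] [h1f h1t]] h0.
have [m em] : exists m, k = m.+3 by exists (k-3)%N; lia.
subst k; rewrite !subSS !subn0 in h3 h2f h2t h1f h1t.
have eqm : forall b (i : 'I_m), step2 w m.+3 (val i, b) = w (val i, b).
  by move=> b i; have hi : (val i < m)%N := ltn_ord i; rewrite step2E; [simpif | lia].
rewrite /pos /neg !big_ord_recr /=.
split; under eq_bigr => i _ do rewrite !eqm.
all: rewrite !step2E; try lia; simpif; rewrite ?subSS ?subn0.
all: rewrite ?h3 ?h1f ?h1t ?h2f ?h2t; case: hs => ->.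
all: rewrite /posp /negp /=; lia.
Qed.


Fixpoint stateR (l : seq nat) : weight * nat :=
  match l with
  | [::] => (g0, 7%N)
  | t :: l' => let: (w, k) := stateR l' in
      if t == 1%N then (step1 w k, k.+2) else (step2 w k, k.+3)
  end.

Definition in12 (t : nat) : bool := (t == 1%N) || (t == 2%N).

Lemma stateR_inv l : exists sg, Inv (stateR l).1 (stateR l).2 sg.
Proof.
elim: l => [|t l [sg IH]] /=; first by exists (-1); exact: inv_g0.
case: (stateR l) IH => w k IH; case: ifP => _ /=.
- by exists (- sg); apply: inv_step1.
- by exists sg; apply: inv_step2.
Qed.

Lemma stateR_deg l : all in12 l ->
  pos (stateR l).1 (stateR l).2 = (4 + sumn l)%N /\
  neg (stateR l).1 (stateR l).2 = (4 + sumn l)%N.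
Proof.
elim: l => [|t l IH] /=; first by split; rewrite /pos /neg /= !big_ord_recr /= big_ord0.
move=> /andP [ht hl]; have [sg Hi] := stateR_inv l.
move: (IH hl) Hi; case: (stateR l) => w k [e1 e2] Hi /=.
move: ht; rewrite /in12; case: eqP => [->|_] /= ht.
- by have [-> ->] := pos_step1 Hi; rewrite e1 e2; lia.
- move/eqP: ht => ->. by have [-> ->] := pos_step2 Hi; rewrite e1 e2; lia.
Qed.

Lemma inv_largest w k sg : Inv w k sg -> largest_adjacent w k.
Proof.
case=> hk hs h3 [[h2f h2t] [h1f h1t]] h0; split.
- exists ((k-2)%N, true); rewrite h2t; split; first by case: hs => ->.
  by right; rewrite /etgt /=; lia.
- move=> n [[i b] [hne hn]]; rewrite /esrc /etgt /= in hn.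
  case: (leqP k i) => hki; first by rewrite h0 ?eqxx in hne.
  case: b hne hn => hne hn; last lia.
  case: (i =P (k-1)%N) => hi; first by rewrite hi h1t eqxx in hne.
  lia.
Qed.

Lemma largest_uniq w k1 k2 : largest_adjacent w k1 -> largest_adjacent w k2 -> k1 = k2.
Proof. move=> [a1 b1] [a2 b2]; have := b1 _ a2; have := b2 _ a1; lia. Qed.

Lemma stateR_gs l : all in12 l -> gs (rev l) (stateR l).1.
Proof.
elim: l => [|t l IH] /=; first by move=> _; exact: gs_nil.
move=> /andP [ht hl]; have [sg Hi] := stateR_inv l.
move: (IH hl) Hi; rewrite rev_cons; case: (stateR l) => w k g Hi /=.
move: ht; rewrite /in12; case: eqP => [->|_] /= ht.
- by apply: gs_1 => //; apply: inv_largest Hi.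
- move/eqP: ht => ->; by apply: gs_2 => //; apply: inv_largest Hi.
Qed.

Lemma gs_stateR s w : gs s w -> all in12 (rev s) /\ w = (stateR (rev s)).1.
Proof.
elim=> [|s0 w0 k g [h1 ->] hl|s0 w0 k g [h1 ->] hl] //=; rewrite rev_rcons /= h1;
  have [sg Hi] := stateR_inv (rev s0); have := inv_largest Hi;
  move: Hi hl; case: (stateR (rev s0)) => w1 k1 /= _ hl hl1;
  by rewrite (largest_uniq hl hl1).
Qed.

Lemma pos_widen w N M : (forall e : edge, (N <= e.1)%N -> w e = 0) -> (N <= M)%N ->
  pos w M = pos w N /\ neg w M = neg w N.
Proof.
move=> h0; elim: M => [|M IH] hNM; first by have -> : N = 0%N by lia.
case: (ltngtP N M.+1) => hN; last by rewrite hN.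
- have [e1 e2] := IH hN.
  by rewrite /pos /neg !big_ord_recr /= !h0 //= -/(pos w M) -/(neg w M) e1 e2 !addn0.
- lia.
Qed.

Lemma deg_state l d : all in12 l ->
  has_degree (stateR l).1 d <-> d = (4 + sumn l)%N.
Proof.
move=> hl; have [e1 e2] := stateR_deg hl; have [sg Hi] := stateR_inv l.
move: e1 e2 Hi; case: (stateR l) => w k /= e1 e2 Hi.
have h0 : forall e : edge, (k <= e.1)%N -> w e = 0 by case: Hi.
split.
- move=> [N [hN ->]].
  have [p1 n1] := pos_widen hN (leq_maxl N k).
  have [p2 n2] := pos_widen h0 (leq_maxr N k).
  rewrite -/(pos w N) -/(neg w N) -p1 -n1 p2 n2 e1 e2; lia.
- move=> ->; exists k; split => //.
  by rewrite -/(pos w k) -/(neg w k) e1 e2 maxnn.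
Qed.

Lemma sg_eq (s1 s2 : int) : s1 = 1 \/ s1 = -1 -> s2 = 1 \/ s2 = -1 -> 2 * s1 = 2 * s2 -> s1 = s2.
Proof. by case=> ->; case=> ->. Qed.

Lemma step1_inj w w' k s s' : Inv w k s -> Inv w' k s' -> step1 w k = step1 w' k -> w = w'.
Proof.
case=> hk hs h3 [[h2f h2t] [h1f h1t]] h0.
case=> _ hs' h3' [[h2f' h2t'] [h1f' h1t']] h0' E.
have E' := fun e => f_equal (fun f => f e) E; rewrite /= in E'.
have ss : s = s'.
  have := E' ((k-2)%N, true); rewrite !step1E; try lia; simpif.
  by rewrite h2t h2t'; apply: sg_eq.
rewrite -ss in h2f' h2t' h1f'; apply: functional_extensionality => -[i b].
case: (leqP i (k-4)) => hi.
  by have := E' (i, b); rewrite !step1E; try lia; simpif.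
have : (i = k-3 \/ i = k-2 \/ i = k-1 \/ k <= i)%N by lia.
case=> [->|[->|[->|hi']]]; first by rewrite h3 h3'.
- by case: b; rewrite ?h2t ?h2t' ?h2f ?h2f'.
- by case: b; rewrite ?h1t ?h1t' ?h1f ?h1f'.
- by rewrite h0 ?h0'.
Qed.

Lemma step2_inj w w' k s s' : Inv w k s -> Inv w' k s' -> step2 w k = step2 w' k -> w = w'.
Proof.
case=> hk hs h3 [[h2f h2t] [h1f h1t]] h0.
case=> _ hs' h3' [[h2f' h2t'] [h1f' h1t']] h0' E.
have E' := fun e => f_equal (fun f => f e) E; rewrite /= in E'.
have ss : s = s'.
  have := E' ((k-2)%N, false); rewrite !step2E; try lia; simpif.
  by rewrite h2f h2f'; apply: sg_eq.
rewrite -ss in h2f' h2t' h1f'; apply: functional_extensionality => -[i b].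
case: (leqP i (k-4)) => hi.
  by have := E' (i, b); rewrite !step2E; try lia; simpif.
have : (i = k-3 \/ i = k-2 \/ i = k-1 \/ k <= i)%N by lia.
case=> [->|[->|[->|hi']]]; first by rewrite h3 h3'.
- by case: b; rewrite ?h2t ?h2t' ?h2f ?h2f'.
- by case: b; rewrite ?h1t ?h1t' ?h1f ?h1f'.
- by rewrite h0 ?h0'.
Qed.

Lemma step1_tag w k s : Inv w k s -> step1 w k ((k.+2 - 5)%N, false) = 0.
Proof.
case=> hk hs h3 [[h2f h2t] [h1f h1t]] h0.
by rewrite step1E; try lia; simpif.
Qed.

Lemma step2_tag w k s : Inv w k s -> step2 w k ((k.+3 - 5)%N, false) != 0.
Proof.
case=> hk hs h3 [[h2f h2t] [h1f h1t]] h0.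
rewrite step2E; try lia; simpif.
have -> : (k.+3 - 5 = k - 2)%N by lia.
by rewrite h2f; case: hs => ->.
Qed.

Lemma stateR_inj l1 l2 : all in12 l1 -> all in12 l2 -> (stateR l1).1 = (stateR l2).1 -> l1 = l2.
Proof.
have K : forall l l', (stateR l).1 = (stateR l').1 -> (stateR l).2 = (stateR l').2.
  move=> l l' E; have [s I] := stateR_inv l; have [s' I'] := stateR_inv l'.
  by apply: (largest_uniq (inv_largest I)); rewrite E; apply: (inv_largest I').
elim: l1 l2 => [|t1 l1 IH] [|t2 l2] h1 h2 E //; have EK := K _ _ E; rewrite /= in h1 h2 E EK.
- have [s I] := stateR_inv l2; move: E EK I => /=.
  case: (stateR l2) => w k /= _; case: ifP => _ /= EK [hk]; lia.
- have [s I] := stateR_inv l1; move: E EK I => /=.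
  case: (stateR l1) => w k /= _; case: ifP => _ /= EK [hk]; lia.
move: h1 h2 => /andP [ht1 hl1] /andP [ht2 hl2].
have [s1 I1] := stateR_inv l1; have [s2 I2] := stateR_inv l2.
destruct (stateR l1) as [w1 k1] eqn:S1; destruct (stateR l2) as [w2 k2] eqn:S2.
try rewrite S1 in IH; simpl in I1, I2.
move: ht1 ht2 E EK; rewrite /in12.
case: eqP => [->|_] /= ht1; case: eqP => [->|_] /= ht2 E EK.
- have ek : k1 = k2 by lia.
  subst k2; have ew := step1_inj I1 I2 E; subst w2.
  by rewrite (IH l2) // S2.
- move/eqP: ht2 => ->; have := step2_tag I2; rewrite -E -EK (step1_tag I1).
  by rewrite eqxx.
- move/eqP: ht1 => ->; have := step2_tag I1; rewrite E EK (step1_tag I2).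
  by rewrite eqxx.
- move/eqP: ht1 => ->; move/eqP: ht2 => ->.
  have ek : k1 = k2 by lia.
  subst k2; have ew := step2_inj I1 I2 E; subst w2.
  by rewrite (IH l2) // S2.
Qed.

Fixpoint compsR (n : nat) : seq (seq nat) :=
  match n with
  | 0 => [:: [::]]
  | 1 => [:: [:: 1%N]]
  | (m.+1 as p).+1 => map (cons 1%N) (compsR p) ++ map (cons 2%N) (compsR m)
  end.

Lemma size_compsR n : size (compsR n) = fib n.+1.
Proof.
suff : size (compsR n) = fib n.+1 /\ size (compsR n.+1) = fib n.+2 by case.
elim: n => [|n [IH1 IH2]] //; split => //.
change (compsR n.+2) with (map (cons 1%N) (compsR n.+1) ++ map (cons 2%N) (compsR n)).
by rewrite size_cat !size_map IH1 IH2.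
Qed.

Lemma mem_consmap (a x : nat) l X : (x :: l \in map (cons a) X) = (x == a) && (l \in X).
Proof.
elim: X => [|y X IH] /=; first by rewrite andbF.
by rewrite !in_cons IH eqseq_cons andb_orr.
Qed.

Lemma nil_consmap (a : nat) X : ([::] \in map (cons a) X) = false.
Proof. by elim: X. Qed.

Lemma sumn0 l : all in12 l -> (sumn l == 0)%N = (l == [::]).
Proof.
case: l => // x l /andP [hx _] /=.
by move: hx; rewrite /in12; case/orP => /eqP ->.
Qed.

Lemma compsRSS n : compsR n.+2 = map (cons 1%N) (compsR n.+1) ++ map (cons 2%N) (compsR n).
Proof. by []. Qed.

Lemma mem_compsR l n : (l \in compsR n) = (all in12 l && (sumn l == n)).
Proof.
elim: l n => [|x l IH] [|[|n]].
- by [].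
- by [].
- by rewrite compsRSS mem_cat !nil_consmap.
- by case: x => [|[|[|x]]]; rewrite inE /= ?add1n ?addSn ?andbF.
- rewrite inE eqseq_cons.
  case: x => [|[|[|x]]] //=.
  + rewrite add1n eqSS; case: (boolP (all in12 l)) => hl /=; last by case: l IH hl.
    by rewrite sumn0.
  + by rewrite !addSn /= andbF.
- rewrite compsRSS mem_cat !mem_consmap !IH.
  case: x => [|[|[|x]]] //=.
  + by rewrite orbF add1n eqSS.
Qed.

Lemma uniq_compsR n : uniq (compsR n).
Proof.
suff : uniq (compsR n) /\ uniq (compsR n.+1) by case.
elim: n => [|n [IH1 IH2]] //; split => //.
change (compsR n.+2) with (map (cons 1%N) (compsR n.+1) ++ map (cons 2%N) (compsR n)).
move: IH1 IH2; set A := compsR n.+1; set B := compsR n => IH1 IH2.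
rewrite cat_uniq !map_inj_uniq ?IH1 ?IH2 //=; try by move=> ? ? [].
rewrite andbT has_map; apply/hasPn => x _ /=.
by rewrite mem_consmap.
Qed.

Theorem corollary6p6 (d : nat) : (3 <= d)%N ->
  exists f : 'I_(fib (d - 3)) -> weight,
    injective f /\
    forall w : weight, (in_Gprime w /\ has_degree w d) <-> exists i, f i = w.
Proof.
move=> hd.
have hI : forall i : 'I_(fib (d - 3)), (4 <= d)%N /\ (i < size (compsR (d - 4)))%N.
  move=> [i hi] /=; rewrite size_compsR.
  have [e3|hd4] : d = 3%N \/ (4 <= d)%N by lia.
    by subst d.
  by split => //; have -> : (d - 4).+1 = (d - 3)%N by lia.
exists (fun i => (stateR (nth [::] (compsR (d - 4)) i)).1); split.
- move=> i j /= E; have [hd4 hi] := hI i; have [_ hj] := hI j.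
  apply: val_inj => /=; apply/eqP; rewrite -(nth_uniq [::] hi hj (uniq_compsR _)).
  apply/eqP; apply: stateR_inj E.
  + by have := mem_nth [::] hi; rewrite mem_compsR => /andP [].
  + by have := mem_nth [::] hj; rewrite mem_compsR => /andP [].
- move=> w; split.
  + move=> [[s g] hdeg]; have [hl ew] := gs_stateR g; subst w.
    have ed := (deg_state _ hl).1 hdeg.
    have hm : rev s \in compsR (d - 4) by rewrite mem_compsR hl /=; apply/eqP; lia.
    have hlt : (index (rev s) (compsR (d - 4)) < fib (d - 3))%N.
      have -> : (d - 3)%N = (d - 4).+1 by lia.
      by rewrite -size_compsR index_mem.
    by exists (Ordinal hlt) => /=; rewrite nth_index.
  + move=> [i <-]; have [hd4 hi] := hI i.
    have := mem_nth [::] hi; rewrite mem_compsR => /andP [hl /eqP hs].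
    split; first by exists (rev (nth [::] (compsR (d - 4)) i)); apply: stateR_gs.
    by apply/(deg_state _ hl); lia.
Qed.
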